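(* Let $(x_k)$ be a bounded sequence in a real Banach space $X$, let $x\in X$ and $c>0$, and suppose that $(x_k-x)$ generates an $\ell_1$-spreading model with some constant strictly greater than $c$. Then there is $n\in\mathbb N$ such that $\operatorname{asep}((x_{k^2})_{k\ge n})>2c$.
   Context: A bounded sequence $(y_k)$ generates an $\ell_1$-spreading model with constant $\delta>0$ if $\|\sum_{i\in F}\alpha_i y_i\|\ge\delta\sum_{i\in F}|\alpha_i|$ for every finite $F\subset\mathbb N$ with $\#F\le\min F$ and all real $(\alpha_i)_{i\in F}$. For a bounded sequence $(z_j)_{j\ge1}$, $\operatorname{asep}(z_j)=\inf\{\|\frac1{\#F}(\sum_{j\in F}z_j-\sum_{j\in H}z_j)\|: F,H\subset\mathbb N\text{ finite nonempty},\ \#F=\#H,\ \max F<\min H\}$; here it is applied to the sequence $j\mapsto x_{(n+j-1)^2}$, $j\ge1$. *)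

(* Defs.v *)
From HB Require Import structures.
From mathcomp Require Import all_boot all_order all_algebra.
From mathcomp Require Import all_classical all_reals all_analysis.
Set Implicit Arguments. Unset Strict Implicit. Unset Printing Implicit Defensive.
Import Order.TTheory GRing.Theory Num.Theory.
Import numFieldNormedType.Exports.
Local Open Scope classical_set_scope.
Local Open Scope ring_scope.

(* Sequences are indexed by the positive integers 1,2,3,...; a sequence is a
   function nat -> V whose value at 0 is irrelevant (never used below except in
   boundedness, which is harmless). Finite subsets of N are duplicate-free
   sequences of naturals. *)

Definition bounded_seq (R : realType) (V : normedModType R) (y : nat -> V) :=
  exists M : R, forall k, `|y k| <= M.

(* (y_k) generates an l1-spreading model with constant delta:
   for every finite F ⊂ N with #F <= min F and all reals (a_i),
   ||sum_{i in F} a_i y_i|| >= delta * sum_{i in F} |a_i|.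
   (The condition "forall i in F, #F <= i" is #F <= min F; it forces i >= 1.) *)
Definition l1_spreading_model (R : realType) (V : normedModType R)
    (y : nat -> V) (delta : R) :=
  bounded_seq y /\
  forall (F : seq nat) (a : nat -> R),
    uniq F -> (forall i, i \in F -> (size F <= i)%N) ->
    delta * (\sum_(i <- F) `|a i|) <= `|\sum_(i <- F) a i *: y i|.

Definition asep (R : realType) (V : normedModType R) (z : nat -> V) : R :=
  inf [set r : R | exists F H : seq nat,
        [/\ uniq F /\ uniq H, F != [::] /\ H != [::] /\ size F = size H,
            (forall j, j \in F -> (0 < j)%N) /\ (forall j, j \in H -> (0 < j)%N),
            (forall i j, i \in F -> j \in H -> (i < j)%N) &
            r = `|(size F)%:R^-1 *: (\sum_(j <- F) z j - \sum_(j <- H) z j)| ] ].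

(* Main.v *)
Require Import Defs.
From HB Require Import structures.
From mathcomp Require Import all_boot all_order all_algebra.
From mathcomp Require Import all_classical all_reals all_analysis.
From mathcomp Require Import zify ring lra.
Import Order.TTheory GRing.Theory Num.Theory.
Import numFieldNormedType.Exports.
Local Open Scope classical_set_scope.
Local Open Scope ring_scope.

Lemma sumc_seq (R : realType) (s : seq nat) (c : R) :
  \sum_(i <- s) c = c * (size s)%:R.
Proof.
elim: s => [|a s IH]; first by rewrite big_nil mulr0.
by rewrite big_cons IH /= mulrS mulrDr mulr1.
Qed.

Lemma sig_inj n : (0 < n)%N -> injective (fun j => ((n + j - 1) ^ 2)%N).
Proof.
move=> n0 i j /eqP; rewrite eqn_exp2r // => /eqP h; lia.
Qed.

Lemma dropped_count t (L : seq nat) : uniq L -> (forall j, j \in L -> (0 < j)%N) ->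
  (size [seq j <- L | (j < t)%N] <= t.-1)%N.
Proof.
move=> uL pL.
have -> : t.-1 = size (iota 1 t.-1) by rewrite size_iota.
apply: uniq_leq_size; first exact: filter_uniq.
move=> j; rewrite mem_filter mem_iota => /andP[jt jL].
have := pL j jL; lia.
Qed.

Lemma core (R : realType) (X : normedModType R) (y : nat -> X) (delta M : R) (n : nat)
  (F H : seq nat) :
  (forall (F : seq nat) (a : nat -> R),
    uniq F -> (forall i, i \in F -> (size F <= i)%N) ->
    delta * (\sum_(i <- F) `|a i|) <= `|\sum_(i <- F) a i *: y i|) ->
  (forall k, `|y k| <= M) -> 0 <= delta -> (0 < n)%N ->
  uniq F -> uniq H -> (forall j, j \in F -> (0 < j)%N) -> (forall j, j \in H -> (0 < j)%N) ->
  (forall i j, i \in F -> j \in H -> (i < j)%N) -> size F = size H ->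
  delta * (2 * (size F)%:R) - (delta + M) * (size F %/ n)%:R <=
  `|\sum_(j <- F) y ((n + j - 1) ^ 2)%N - \sum_(j <- H) y ((n + j - 1) ^ 2)%N|.
Proof.
move=> spr My d0 n0 uF uH pF pH FH sFH.
set m := size F.
set sg := fun j => ((n + j - 1) ^ 2)%N.
set eps := fun j : nat => if j \in F then (1 : R) else -1.
set L := F ++ H.
have uL : uniq L.
  rewrite cat_uniq uF uH /= andbT; apply/hasPn => j jH; apply/negP => jF.
  by have := FH j j jF jH; rewrite ltnn.
have pL : forall j, j \in L -> (0 < j)%N by move=> j; rewrite mem_cat => /orP[/pF|/pH].
have sL : size L = (2 * m)%N by rewrite size_cat -sFH; lia.
have eqv : \sum_(j <- F) y (sg j) - \sum_(j <- H) y (sg j) =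
    \sum_(j <- L) eps j *: y (sg j).
  rewrite big_cat /=; congr (_ + _).
    by apply: eq_big_seq => j jF; rewrite /eps jF scale1r.
  rewrite -sumrN; apply: eq_big_seq => j jH.
  have jF : j \notin F by apply/negP => jF; have := FH j j jF jH; rewrite ltnn.
  by rewrite /eps (negbTE jF) scaleN1r.
rewrite [X in `|X|]eqv.
set d := (m %/ n)%N.
set t := d.+1.
rewrite (bigID (fun j => (t <= j)%N)) /=.
set kept := \sum_(j <- L | (t <= j)%N) _.
set drp := \sum_(j <- L | ~~ (t <= j)%N) _.
set K := size [seq j <- L | (t <= j)%N].
set D := size [seq j <- L | ~~ (t <= j)%N].
have KD : (K + D)%N = (2 * m)%N.
  by rewrite /K /D !size_filter -sL -(count_predC (fun j => (t <= j)%N)).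
have Dd : (D <= d)%N.
  have := @dropped_count t L uL pL.
  by rewrite /D (eq_filter (a2 := fun j => (j < t)%N)) // => j; rewrite -ltnNge.
have dn : (d * n <= m)%N by rewrite /d leq_trunc_div.
have big2m : (2 * m <= (n + d) ^ 2)%N.
  have := divn_eq m n; rewrite -/d => e.
  have := ltn_pmod m n0; nia.
set a := fun k : nat => if k \in map sg F then (1 : R) else -1.
set G := map sg [seq j <- L | (t <= j)%N].
have keptE : kept = \sum_(k <- G) a k *: y k.
  rewrite big_map big_filter; apply: eq_bigr => j _.
  by rewrite /a (mem_map (@sig_inj n n0)).
have hk : delta * K%:R <= `|kept|.
  rewrite keptE.
  have -> : K%:R = \sum_(k <- G) `|a k| :> R.
    rewrite (eq_bigr (fun _ => (1:R))); last by move=> k _; rewrite /a; case: ifP => _; rewrite ?normrN normr1.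
    by rewrite sumc_seq mul1r size_map.
  apply: spr.
    by rewrite map_inj_uniq ?filter_uniq //; exact: (@sig_inj n n0).
  move=> k /mapP[j]; rewrite mem_filter => /andP[tj jL] ->.
  rewrite size_map /sg.
  apply: (leq_trans (n := (2 * m)%N)); first by rewrite -sL; by rewrite size_filter count_size.
  apply: (leq_trans big2m); rewrite leq_exp2r //; lia.
have hd : `|drp| <= M * D%:R.
  apply: (le_trans (ler_norm_sum _ _ _)).
  rewrite /D -sumc_seq big_filter; apply: ler_sum => j _.
  rewrite normrZ /eps; case: ifP => _; rewrite ?normrN normr1 mul1r; exact: My.
have M0 : 0 <= M by apply: le_trans (My 0%N).
have KDr : K%:R + D%:R = 2 * m%:R :> R by rewrite -natrD KD natrM.
have Ddr : D%:R <= d%:R :> R by rewrite ler_nat.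
apply: (le_trans _ (lerB_normD kept drp)).
have h3 : (delta + M) * D%:R <= (delta + M) * d%:R by apply: ler_wpM2l => //; lra.
nra.
Qed.

Lemma sumconst (X : zmodType) (s : seq nat) (c : X) : \sum_(i <- s) c = c *+ size s.
Proof.
elim: s => [|a s IH]; first by rewrite big_nil.
by rewrite big_cons IH /= mulrS.
Qed.

Theorem lemma4p6 (R : realType) (X : completeNormedModType R)
    (x : nat -> X) (x0 : X) (c : R) :
  bounded_seq x -> 0 < c ->
  (exists delta : R, c < delta /\ l1_spreading_model (fun k => x k - x0) delta) ->
  exists n : nat, (1 <= n)%N /\
    2 * c < asep (fun j => x ((n + j - 1) ^ 2)%N).
Proof.
move=> _ c0 [delta [cd [[M My] spr]]].
have M0 : 0 <= M by apply: le_trans (My 0%N).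
set q := (delta + M) / (delta - c).
set n := (Num.Def.trunc q).+1.
have qn : q < n%:R by apply: truncnS_gt.
have dc : 0 < delta - c by lra.
have hn : delta + M < n%:R * (delta - c).
  by rewrite -ltr_pdivrMr // -/q.
have n0 : (0 < n)%N by [].
exists n; split => //.
apply: (lt_le_trans (y := delta + c)); first lra.
apply: lb_le_inf.
  exists (`|(size [:: 1%N])%:R^-1 *: (\sum_(j <- [:: 1%N]) x ((n + j - 1) ^ 2)%N
            - \sum_(j <- [:: 2%N]) x ((n + j - 1) ^ 2)%N)|).
  exists [:: 1%N], [:: 2%N]; split => //.
  - by split => // j; rewrite inE => /eqP ->.
  - by move=> i j; rewrite !inE => /eqP -> /eqP ->.
move=> r [F [H [[uF uH] [Fn [_ sFH]] [pF pH] FH ->]]].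
set m := size F.
have m0 : (0 < m)%N by rewrite /m; case: (F) Fn.
have m0r : 0 < m%:R :> R by rewrite ltr0n.
have e : forall s : seq nat, \sum_(j <- s) (x ((n + j - 1) ^ 2)%N - x0) =
     \sum_(j <- s) x ((n + j - 1) ^ 2)%N - x0 *+ size s.
  by move=> s; rewrite sumrB sumconst.
have ev : \sum_(j <- F) x ((n + j - 1) ^ 2)%N - \sum_(j <- H) x ((n + j - 1) ^ 2)%N =
   \sum_(j <- F) (x ((n + j - 1) ^ 2)%N - x0) - \sum_(j <- H) (x ((n + j - 1) ^ 2)%N - x0).
  by rewrite !e -sFH opprB addrA subrK.
rewrite ev normrZ ger0_norm ?invr_ge0 ?ler0n // ler_pdivlMl //.
have := @core R X (fun k => x k - x0) delta M n F H spr My ltac:(lra) n0 uF uH pF pH FH sFH.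
rewrite -/m => hc.
set d := (m %/ n)%N.
have dn : d%:R * n%:R <= m%:R :> R by rewrite -natrM ler_nat /d leq_trunc_div.
have d0 : 0 <= d%:R :> R by rewrite ler0n.
have h1 : (delta + M) * d%:R <= n%:R * (delta - c) * d%:R by apply: ler_wpM2r => //; lra.
have h2 : n%:R * (delta - c) * d%:R <= (delta - c) * m%:R.
  by nra.
lra.
Qed.
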